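(* Let $H$ be an $r$-graph with $h$ vertices. Then $$C_r(n,H)=O\!\left(n^{\frac{h-r}{h}}\cdot h^{2r+\frac{r}{h}}\right).$$
   Context: An $r$-graph is an $r$-uniform hypergraph; $K_n^{(r)}$ is the complete $r$-graph on $n$ vertices. A copy of an $r$-graph $H$ in $K_n^{(r)}$ is a subhypergraph isomorphic to $H$. An $(n,r,H)$-local coloring with $k$ colors is a family of edge-colorings $f_v:E(K_n^{(r)})\to[k]$, one per vertex $v$, such that for every copy $T$ of $H$ there is $u\in V(T)$ with $f_u$ injective on $E(T)$. $C_r(n,H)$ is the minimum such $k$. *)

(* Defs.v *)
From Stdlib Require Import Reals.
From mathcomp Require Import all_boot.
From mathcomp Require Import boolp.

Set Implicit Arguments.
Unset Strict Implicit.
Unset Printing Implicit Defensive.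

Definition is_rgraph (r h : nat) (EH : {set {set 'I_h}}) : Prop :=
  forall e, e \in EH -> #|e| = r.

(* Copies of H in K_n^(r): for every injective phi : 'I_h -> 'I_n, the
   subhypergraph with vertex set phi('I_h) and edge set {phi(e) | e in EH}.
   Every copy of H arises in this way.  A family of edge colourings
   f v : (r-subsets of 'I_n) -> [k]  (given as a function on all subsets,
   only its values on r-sets matter) is an (n,r,H)-local colouring if for
   every copy T of H some u in V(T) has f u injective on E(T). *)
Definition local_coloring (n h k : nat) (EH : {set {set 'I_h}})
  (f : 'I_n -> {set 'I_n} -> 'I_k) : Prop :=
  forall phi : 'I_h -> 'I_n, injective phi ->
    exists u : 'I_n,
      u \in [set phi i | i : 'I_h] /\
      {in ((fun e : {set 'I_h} => phi @: e) @: EH) &, injective (f u)}.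

Definition has_local_coloring (n h k : nat) (EH : {set {set 'I_h}}) : Prop :=
  exists f : 'I_n -> {set 'I_n} -> 'I_k, @local_coloring n h k EH f.

(* C_r(n,H): the minimum number k of colours admitting a local colouring
   (0 by convention if no k works, which only happens when h = 0). *)
Definition C_r (n h : nat) (EH : {set {set 'I_h}}) : nat :=
  match pselect (exists k, `[< @has_local_coloring n h k EH >]) with
  | left ex => ex_minn ex
  | right _ => 0
  end.

(* Main.v *)
From Stdlib Require Import Reals Lra ZArith.
Require Import Defs.
From mathcomp Require Import all_boot zify boolp.
Set Implicit Arguments.
Unset Strict Implicit.
Unset Printing Implicit Defensive.

Definition Bset (I W : finType) (A : I -> {set W}) (J : {set I}) : {set W} :=
  [set w | [forall j in J, w \notin A j]].

Lemma BsetE (I W : finType) (A : I -> {set W}) (J : {set I}) w :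
  (w \in Bset A J) = [forall j in J, w \notin A j].
Proof. by rewrite inE. Qed.

Lemma card_bigcup_le (I T : finType) (J : {pred I}) (F : I -> {set T}) :
  #|\bigcup_(j in J) F j| <= \sum_(j in J) #|F j|.
Proof.
elim/big_rec2: _; first by rewrite cards0.
move=> j S n _ h; apply: leq_trans (leq_card_setU _ _) _.
by rewrite leq_add2l.
Qed.

Lemma Bset_sub (I W : finType) (A : I -> {set W}) (J J' : {set I}) :
  J' \subset J -> Bset A J \subset Bset A J'.
Proof.
move=> sJ; apply/subsetP => w; rewrite !BsetE => /forall_inP H.
by apply/forall_inP => j jJ; apply: H; apply: (subsetP sJ).
Qed.

Lemma lll_step (I W : finType) (A : I -> {set W}) (dep : I -> I -> bool) (D : nat)
  (J : {set I}) (i : I) :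
  0 < D -> 0 < #|W| ->
  #|[set j | dep i j]| <= D ->
  4 * D * #|A i| <= #|W| ->
  (forall J' : {set I}, (forall j, j \in J' -> ~~ dep i j) ->
      #|A i :&: Bset A J'| * #|W| = #|A i| * #|Bset A J'|) ->
  (forall j (J' : {set I}), #|J'| < #|J| -> j \notin J' ->
      2 * D * #|A j :&: Bset A J'| <= #|Bset A J'|) ->
  i \notin J ->
  2 * D * #|A i :&: Bset A J| <= #|Bset A J|.
Proof.
move=> D0 W0 degi pi indep IH iJ.
set J1 := J :&: [set j | dep i j].
set J2 := J :\: J1.
have sJ2 : J2 \subset J by apply: subsetDl.
have B2B : Bset A J \subset Bset A J2 by apply: Bset_sub.
have cov : Bset A J2 \subset Bset A J :|: \bigcup_(j in J1) (A j :&: Bset A J2).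
  apply/subsetP => w wB2; rewrite inE.
  case wB: (w \in Bset A J) => //=.
  move: wB; rewrite BsetE => /negbT; rewrite negb_forall_in => /exists_inP [j jJ].
  rewrite negbK => wAj.
  apply/bigcupP; exists j; last by rewrite inE wAj wB2.
  rewrite inE jJ /=.
  move: wB2; rewrite BsetE => /forall_inP H.
  apply/negPn/negP => nj.
  have j2 : j \in J2 by move: nj; rewrite !inE jJ /= => ->.
  by have := H j j2; rewrite wAj.
have c1 : #|Bset A J2| <= #|Bset A J| + \sum_(j in J1) #|A j :&: Bset A J2|.
  apply: leq_trans (subset_leq_card cov) _.
  apply: leq_trans (leq_card_setU _ _) _.
  by rewrite leq_add2l; apply: card_bigcup_le.
have hj : forall j, j \in J1 -> 2 * D * #|A j :&: Bset A J2| <= #|Bset A J2|.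
  move=> j jJ1; apply: IH.
    have jJ : j \in J by move: jJ1; rewrite inE => /andP[].
    rewrite (cardsD1 j J) jJ add1n ltnS; apply: subset_leq_card.
    apply/subsetP => x; rewrite !inE => /andP[nx xJ].
    rewrite xJ andbT; apply/eqP => ej; move: nx; rewrite ej.
    by move: jJ1; rewrite !inE => ->.
  by move: jJ1; rewrite !inE => -> .
have c2 : 2 * D * (\sum_(j in J1) #|A j :&: Bset A J2|) <= D * #|Bset A J2|.
  rewrite big_distrr /=.
  apply: (@leq_trans (\sum_(j in J1) #|Bset A J2|)); first by apply: leq_sum.
  rewrite sum_nat_const; apply: leq_mul => //.
  apply: leq_trans degi; apply: subset_leq_card; exact: subsetIr.
have c3 : #|Bset A J2| <= 2 * #|Bset A J|.
  have : 2 * D * #|Bset A J2| <= 2 * D * #|Bset A J| + D * #|Bset A J2|.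
    apply: leq_trans (_ : 2 * D * (#|Bset A J| + \sum_(j in J1) #|A j :&: Bset A J2|) <= _).
      by rewrite leq_mul2l c1 orbT.
    by rewrite mulnDr leq_add2l.
  nia.
have ind2 : #|A i :&: Bset A J2| * #|W| = #|A i| * #|Bset A J2|.
  apply: indep => j; rewrite !inE => /andP[/negP nj jJ]; apply/negP => dj.
  by apply: nj; rewrite jJ dj.
have c4 : 4 * D * #|A i :&: Bset A J2| <= #|Bset A J2|.
  have : 4 * D * #|A i :&: Bset A J2| * #|W| <= #|Bset A J2| * #|W|.
    rewrite -mulnA ind2 mulnA [X in _ <= X]mulnC.
    exact: leq_mul.
  rewrite leq_mul2r; case/orP => //; by rewrite eqn0Ngt W0.
have c5 : #|A i :&: Bset A J| <= #|A i :&: Bset A J2|.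
  by apply: subset_leq_card; apply: setIS.
nia.
Qed.

Lemma lll (I W : finType) (A : I -> {set W}) (dep : I -> I -> bool) (D : nat) :
  0 < D -> 0 < #|W| ->
  (forall i, #|[set j | dep i j]| <= D) ->
  (forall i, 4 * D * #|A i| <= #|W|) ->
  (forall i (J' : {set I}), (forall j, j \in J' -> ~~ dep i j) ->
      #|A i :&: Bset A J'| * #|W| = #|A i| * #|Bset A J'|) ->
  exists w, forall i, w \notin A i.
Proof.
move=> D0 W0 deg p indep.
have claim : forall m (J : {set I}) i, #|J| <= m -> i \notin J ->
    2 * D * #|A i :&: Bset A J| <= #|Bset A J|.
  elim=> [|m IHm] J i hJ iJ; apply: (lll_step D0 W0 (deg i) (p i) (indep i)) iJ.
  - by move=> j J' lt; move: hJ; rewrite leqn0 => /eqP e; rewrite e in lt.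
  - move=> j J' lt jJ'; apply: IHm => //; lia.
have pos : forall m (J : {set I}), #|J| <= m -> 0 < #|Bset A J|.
  elim=> [|m IHm] J hJ.
    move: hJ; rewrite leqn0 cards_eq0 => /eqP ->.
    suff -> : Bset A set0 = setT by rewrite cardsT.
    by apply/setP => w; rewrite !inE; apply/forall_inP => j; rewrite inE.
  case: (set_0Vmem J) => [-> | [i iJ]].
    by apply: IHm; rewrite cards0.
  set J' := J :\ i.
  have hJ' : #|J'| <= m by move: hJ; rewrite (cardsD1 i J) iJ.
  have iJ' : i \notin J' by rewrite !inE eqxx.
  have := claim _ _ _ (leqnn _) iJ'.
  have := IHm _ hJ'.
  have eB : Bset A J = Bset A J' :\: A i.
    apply/setP => w; rewrite !inE.
    apply/forall_inP/andP.
      move=> H; split; first by apply: H.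
      by apply/forall_inP => j; rewrite !inE => /andP[_ jJ]; apply: H.
    case=> wi /forall_inP H j jJ.
    case: (eqVneq j i) => [-> // | nji].
    by apply: H; rewrite !inE nji.
  rewrite eB.
  have := cardsID (A i) (Bset A J').
  rewrite setIC.
  nia.
have := pos _ setT (leqnn _).
case/card_gt0P => w; rewrite inE => /forall_inP H.
by exists w => i; apply: H; rewrite inE.
Qed.
Definition splice (V K : finType) (S : {set V}) (a b : {ffun V -> K}) : {ffun V -> K} :=
  [ffun v => if v \in S then a v else b v].

Lemma indep_split (V K : finType) (S : {set V}) (A B : {set {ffun V -> K}}) :
  (forall w w' : {ffun V -> K}, (forall v, v \in S -> w v = w' v) -> (w \in A) = (w' \in A)) ->
  (forall w w' : {ffun V -> K}, (forall v, v \notin S -> w v = w' v) -> (w \in B) = (w' \in B)) ->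
  #|A :&: B| * #|{ffun V -> K}| = #|A| * #|B|.
Proof.
move=> detA detB.
pose Phi (p : {ffun V -> K} * {ffun V -> K}) := (splice S p.1 p.2, splice S p.2 p.1).
have PhiK : cancel Phi Phi.
  case=> a b; rewrite /Phi /splice /=; congr pair; apply/ffunP => v; rewrite !ffunE;
  by case: (v \in S).
have e : setX A B = Phi @^-1: setX (A :&: B) setT.
  apply/setP => [[a b]]; rewrite !inE /= andbT.
  have -> : (splice S a b \in A) = (a \in A).
    by apply: detA => v vS; rewrite /splice ffunE vS.
  have -> : (splice S a b \in B) = (b \in B).
    by apply: detB => v vS; rewrite /splice ffunE (negbTE vS).
  by [].
rewrite -cardsX e card_preimset; last exact: can_inj PhiK.
by rewrite cardsX cardsT.
Qed.
Lemma card_fam (V K : finType) (P : {set V}) (G : V -> {set K}) :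
  #|[set w : {ffun V -> K} | [forall v in P, w v \in G v]]| =
  (\prod_(v in P) #|G v|) * #|K| ^ #|~: P|.
Proof.
pose F := fun v : V => (if v \in P then [pred x | x \in G v] else predT) : pred K.
have eqF : [set w : {ffun V -> K} | [forall v in P, w v \in G v]] =i
          (family F : simpl_pred {ffun V -> K}).
  move=> w; rewrite inE; apply/forall_inP/familyP => H v.
    rewrite /F; case: ifP => vP //=; exact: H.
  by move=> vP; have := H v; rewrite /F vP.
rewrite (eq_card eqF) card_family.
have -> : foldr muln 1 [seq #|F x| | x : V] = \prod_(x : V) #|F x|.
  rewrite foldrE big_map big_enum /=; apply: eq_bigl => x; by rewrite inE.
rewrite (bigID (mem P)) /=.
have -> : \prod_(i in P) #|F i| = \prod_(i in P) #|G i|.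
  by apply: eq_bigr => v vP; rewrite /F vP.
have -> : \prod_(i | i \notin P) #|F i| = \prod_(i in ~: P) #|K|.
  apply: eq_big => v; first by rewrite inE.
  by move=> /negbTE vP; rewrite /F vP cardT.
by rewrite prod_nat_const.
Qed.

Lemma card_eq2 (V K : finType) (a b : V) : a != b ->
  #|[set w : {ffun V -> K} | w a == w b]| * #|K| <= #|{ffun V -> K}|.
Proof.
move=> ab.
have sub : [set w : {ffun V -> K} | w a == w b] \subset
   \bigcup_(c : K) [set w : {ffun V -> K} | [forall v in [set a; b], w v \in [set c]]].
  apply/subsetP => w; rewrite inE => /eqP e; apply/bigcupP; exists (w a) => //.
  rewrite inE; apply/forall_inP => v; rewrite !inE => /orP[]/eqP->; by rewrite ?e eqxx.
have c1 := subset_leq_card sub.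
have c2 := card_bigcup_le [pred c : K | true]
   (fun c => [set w : {ffun V -> K} | [forall v in [set a; b], w v \in [set c]]]).
have c3 : forall c : K, #|[set w : {ffun V -> K} | [forall v in [set a; b], w v \in [set c]]]|
   = #|K| ^ (#|V| - 2).
  move=> c; rewrite card_fam.
  rewrite (eq_bigr (fun _ => 1)); last by move=> v _; rewrite cards1.
  rewrite prod_nat_const exp1n mul1n.
  have := cardsC [set a; b]; rewrite cards2 ab => <-. 
  by congr (_ ^ _); rewrite addKn.
rewrite (eq_bigr (fun _ => #|K| ^ (#|V| - 2))) in c2; last by move=> c _; exact: c3.
rewrite sum_nat_const in c2.
have V2 : 2 <= #|V|.
  have := subset_leq_card (subsetT [set a; b]); rewrite cards2 ab cardsT; by [].
rewrite card_ffun.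
have : #|[set w : {ffun V -> K} | w a == w b]| <= #|K| * #|K| ^ (#|V| - 2).
  apply: leq_trans c1 _; apply: leq_trans c2 _.
  by rewrite cardE /= -cardE.
move=> h; apply: leq_trans (leq_mul h (leqnn #|K|)) _.
rewrite -expnS mulnC -expnS.
by have -> : (#|V| - 2).+2 = #|V| by lia.
Qed.

Definition Vt (n : nat) := ('I_n * {set 'I_n})%type.

Definition injw n k (w : {ffun Vt n -> 'I_k}) (u : 'I_n) (Es : {set {set 'I_n}}) : bool :=
  [forall x in Es, forall y in Es, (w (u, x) == w (u, y)) ==> (x == y)].

Definition Cset n k (Es : {set {set 'I_n}}) (u : 'I_n) : {set {ffun Vt n -> 'I_k}} :=
  [set w | ~~ injw w u Es].

Arguments Cset {n} k Es u.

Lemma Cset_det n k (Es : {set {set 'I_n}}) u (w w' : {ffun Vt n -> 'I_k}) :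
  (forall x, x \in Es -> w (u, x) = w' (u, x)) ->
  (w \in Cset k Es u) = (w' \in Cset k Es u).
Proof.
move=> H; rewrite !inE /injw; congr negb.
apply/idP/idP => /forall_inP H1; apply/forall_inP => x xE; apply/forall_inP => y yE;
  have /forall_inP/(_ y yE) := H1 x xE; by rewrite !H.
Qed.

Lemma Cset_card n k (Es : {set {set 'I_n}}) u :
  #|Cset k Es u| * k <= #|Es| ^ 2 * #|{ffun Vt n -> 'I_k}|.
Proof.
have sub : Cset k Es u \subset \bigcup_(x in Es) \bigcup_(y in Es :\ x)
     [set w : {ffun Vt n -> 'I_k} | w (u, x) == w (u, y)].
  apply/subsetP => w; rewrite inE /injw negb_forall_in => /exists_inP [x xE].
  rewrite negb_forall_in => /exists_inP [y yE]; rewrite negb_imply => /andP[e nxy].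
  apply/bigcupP; exists x => //; apply/bigcupP; exists y; last by rewrite inE.
  by rewrite !inE yE eq_sym nxy.
have c1 := subset_leq_card sub.
apply: leq_trans (leq_mul c1 (leqnn k)) _.
apply: leq_trans (leq_mul (card_bigcup_le _ _) (leqnn k)) _.
rewrite big_distrl /=.
apply: (@leq_trans (\sum_(x in Es) (#|Es| * #|{ffun Vt n -> 'I_k}|))).
  apply: leq_sum => x xE.
  apply: leq_trans (leq_mul (card_bigcup_le _ _) (leqnn k)) _.
  rewrite big_distrl /=.
  apply: (@leq_trans (\sum_(y in Es :\ x) #|{ffun Vt n -> 'I_k}|)).
    apply: leq_sum => y; rewrite !inE => /andP[nyx _].
    have := @card_eq2 (Vt n) 'I_k (u, x) (u, y).
    rewrite card_ord; apply.
    by apply/negP => /eqP [] e; move: nyx; rewrite e eqxx.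
  rewrite sum_nat_const; apply: leq_mul => //.
  by apply: subset_leq_card; apply: subsetDl.
by rewrite sum_nat_const mulnA.
Qed.

Lemma cap_card n k (Es : {set {set 'I_n}}) (U : {set 'I_n}) :
  0 < k ->
  #|\bigcap_(u in U) Cset k Es u| * k ^ #|U| <=
    (#|Es| ^ 2) ^ #|U| * #|{ffun Vt n -> 'I_k}|.
Proof.
move=> k0.
have W0 : 0 < #|{ffun Vt n -> 'I_k}|.
  by rewrite card_ffun card_ord expn_gt0 k0.
suff H : forall m (U' : {set 'I_n}), #|U'| == m ->
  #|\bigcap_(u in U') Cset k Es u| * k ^ #|U'| <=
    (#|Es| ^ 2) ^ #|U'| * #|{ffun Vt n -> 'I_k}| by exact: (H _ U (eqxx _)).
elim=> [|m IH] U' hU.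
  move: (hU); rewrite cards_eq0 => /eqP ->; by rewrite big_set0 cardsT cards0 !expn0 muln1 mul1n.
have [u uU] : exists u, u \in U'.
  by apply/set0Pn; rewrite -card_gt0 (eqP hU).
rewrite (big_setD1 u uU) /=.
have hU' : #|U' :\ u| == m.
  by move: hU; rewrite (cardsD1 u U') uU add1n eqSS.
have IH' := IH _ hU'.
have ind := @indep_split (Vt n) 'I_k [set p : Vt n | p.1 == u] (Cset k Es u)
   (\bigcap_(v in U' :\ u) Cset k Es v).
rewrite (eqP hU') in IH'; rewrite (eqP hU).
have ind' : #|Cset k Es u :&: \bigcap_(v in U' :\ u) Cset k Es v| * #|{ffun Vt n -> 'I_k}| =
    #|Cset k Es u| * #|\bigcap_(v in U' :\ u) Cset k Es v|.
  apply: ind.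
  - move=> w w' H; apply: Cset_det => x _; apply: H; by rewrite inE.
  - move=> w w' H.
    apply/bigcapP/bigcapP => H2 v vU; have := H2 v vU;
      (have nvu : v != u by move: vU; rewrite !inE => /andP[]);
      rewrite (@Cset_det _ _ Es v w w') // => x _; apply: H; by rewrite inE.
have cu := @Cset_card n k Es u.
set a := #|Cset k Es u :&: _| in ind' *.
set b := #|Cset k Es u| in ind' cu.
set c := #|\bigcap_(v in U' :\ u) _| in ind' IH'.
set W := #|{ffun Vt n -> 'I_k}| in W0 ind' cu IH' *.
set E2 := #|Es| ^ 2 in cu IH' *.
rewrite -(leq_pmul2r W0) !expnS.
set K' := k ^ m in IH' *. set F := E2 ^ m in IH' *.
have e1 : a * (k * K') * W = (b * k) * (c * K') by rewrite mulnAC ind'; lia.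
rewrite e1.
apply: leq_trans (leq_mul cu IH') _.
nia.
Qed.

Lemma leq_expl m n e : m <= n -> m ^ e <= n ^ e.
Proof. by case: e => [//|e] H; rewrite leq_exp2r. Qed.

Definition im h n (phi : {ffun 'I_h -> 'I_n}) : {set 'I_n} := [set phi i | i : 'I_h].
Definition Eim h n (EH : {set {set 'I_h}}) (phi : {ffun 'I_h -> 'I_n}) : {set {set 'I_n}} :=
  (fun e : {set 'I_h} => phi @: e) @: EH.
Definition Aev h n k (EH : {set {set 'I_h}}) (phi : {ffun 'I_h -> 'I_n}) :
  {set {ffun Vt n -> 'I_k}} :=
  if injectiveb phi then \bigcap_(u in im phi) Cset k (Eim EH phi) u else set0.
Definition Sv h n (EH : {set {set 'I_h}}) (phi : {ffun 'I_h -> 'I_n}) : {set Vt n} :=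
  if injectiveb phi then setX (im phi) (Eim EH phi) else set0.
Definition dep h n (EH : {set {set 'I_h}}) (phi psi : {ffun 'I_h -> 'I_n}) : bool :=
  [exists v, (v \in Sv EH phi) && (v \in Sv EH psi)].

Lemma A_det h n k (EH : {set {set 'I_h}}) (phi : {ffun 'I_h -> 'I_n})
  (w w' : {ffun Vt n -> 'I_k}) :
  (forall v, v \in Sv EH phi -> w v = w' v) ->
  (w \in Aev k EH phi) = (w' \in Aev k EH phi).
Proof.
rewrite /Aev /Sv; case: (injectiveb phi); last by rewrite !inE.
move=> H; apply/bigcapP/bigcapP => H2 u uI; have := H2 u uI;
  rewrite (@Cset_det _ _ _ u w w') // => x xE; apply: H; by rewrite inE /= uI xE.
Qed.

Lemma B_det h n k (EH : {set {set 'I_h}}) (phi : {ffun 'I_h -> 'I_n})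
  (J : {set {ffun 'I_h -> 'I_n}}) (w w' : {ffun Vt n -> 'I_k}) :
  (forall psi, psi \in J -> ~~ dep EH phi psi) ->
  (forall v, v \notin Sv EH phi -> w v = w' v) ->
  (w \in Bset (Aev k EH) J) = (w' \in Bset (Aev k EH) J).
Proof.
move=> nd H; rewrite !BsetE.
have E : forall psi, psi \in J -> (w \in Aev k EH psi) = (w' \in Aev k EH psi).
  move=> psi pJ; apply: A_det => v vS; apply: H; apply/negP => vS'.
  have := nd psi pJ; rewrite /dep negb_exists => /forallP /(_ v).
  by rewrite vS vS'.
apply/forall_inP/forall_inP => H2 psi pJ; have := H2 psi pJ; by rewrite E.
Qed.

Lemma A_card h n k (EH : {set {set 'I_h}}) (phi : {ffun 'I_h -> 'I_n}) :
  0 < k ->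
  #|Aev k EH phi| * k ^ h <= (#|EH| ^ 2) ^ h * #|{ffun Vt n -> 'I_k}|.
Proof.
move=> k0; rewrite /Aev; case: injectiveP => [inj|_]; last by rewrite cards0.
have cI : #|im phi| = h by rewrite /im card_imset // card_ord.
have := cap_card (Eim EH phi) (im phi) k0; rewrite cI => H.
apply: leq_trans H _; rewrite leq_mul2r; apply/orP; right.
apply: leq_expl; rewrite leq_sqr; exact: leq_imset_card.
Qed.

Lemma deg_bound r h n (EH : {set {set 'I_h}}) (phi : {ffun 'I_h -> 'I_n}) :
  @is_rgraph r h EH -> r <= h ->
  #|[set psi | dep EH phi psi]| <= #|EH| * (h ^ r * n ^ (h - r)).
Proof.
move=> rg rh.
have sub : [set psi | dep EH phi psi] \subset
    \bigcup_(e in EH) [set psi : {ffun 'I_h -> 'I_n} | [forall i in e, psi i \in im phi]].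
  apply/subsetP => psi; rewrite inE /dep => /existsP [[u E]].
  rewrite /Sv; case: (injectiveb phi); last by rewrite inE.
  case: (injectiveb psi); last by rewrite andbC inE.
  rewrite !inE /= => /andP[/andP[_ Ephi] /andP[_ Epsi]].
  case/imsetP: Epsi => e eH EE; case/imsetP: Ephi => e0 e0H EE0.
  apply/bigcupP; exists e => //; rewrite inE; apply/forall_inP => i ie.
  have : psi i \in E by rewrite EE; apply: imset_f.
  rewrite EE0 => /imsetP [j _ ->]; rewrite /im; apply: imset_f; done.
apply: leq_trans (subset_leq_card sub) _.
apply: leq_trans (card_bigcup_le _ _) _.
rewrite -sum_nat_const; apply: leq_sum => e eH.
rewrite card_fam prod_nat_const card_ord.
have ce := rg e eH.
have -> : #|~: e| = h - r.
  have := cardsC e; rewrite ce [#|'I_h|]card_ord; lia.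
rewrite ce; apply: leq_mul => //; apply: leq_expl.
by rewrite /im; apply: leq_trans (leq_imset_card _ _) _; rewrite card_ord.
Qed.

Lemma exists_coloring r h n k (EH : {set {set 'I_h}}) :
  @is_rgraph r h EH -> r <= h -> 0 < k ->
  4 * (#|EH| * (h ^ r * n ^ (h - r)) + 1) * (#|EH| ^ 2) ^ h <= k ^ h ->
  @has_local_coloring n h k EH.
Proof.
move=> rg rh k0 big.
set D := #|EH| * (h ^ r * n ^ (h - r)) + 1 in big.
have W0 : 0 < #|{ffun Vt n -> 'I_k}| by rewrite card_ffun card_ord expn_gt0 k0.
have hp : forall phi : {ffun 'I_h -> 'I_n}, 4 * D * #|Aev k EH phi| <= #|{ffun Vt n -> 'I_k}|.
  move=> phi; have := A_card EH phi k0.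
    move=> H; rewrite -(@leq_pmul2r (k ^ h)); last by rewrite expn_gt0 k0.
    apply: (@leq_trans (4 * D * ((#|EH| ^ 2) ^ h * #|{ffun Vt n -> 'I_k}|))).
      by rewrite -mulnA leq_mul2l H orbT.
    by rewrite mulnA [X in _ <= X]mulnC leq_mul2r big orbT.
have hi : forall (phi : {ffun 'I_h -> 'I_n}) (J : {set {ffun 'I_h -> 'I_n}}), (forall j, j \in J -> ~~ dep EH phi j) ->
  #|Aev k EH phi :&: Bset (Aev k EH) J| * #|{ffun Vt n -> 'I_k}| = #|Aev k EH phi| * #|Bset (Aev k EH) J|.
  move=> phi J nd; apply: (@indep_split (Vt n) 'I_k (Sv EH phi)).
      by move=> ? ?; apply: A_det.
    by move=> ? ?; apply: B_det.
have [w Hw] := @lll {ffun 'I_h -> 'I_n} {ffun Vt n -> 'I_k} (Aev k EH) (dep EH) D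
  (ltn_addl _ (ltn0Sn 0)) W0
  (fun phi => leq_trans (deg_bound phi rg rh) (leq_addr 1 _)) hp hi.
exists (fun u E => w (u, E)) => phi injphi.
pose p := finfun phi.
have pE : p =1 phi by move=> i; rewrite ffunE.
have injp : injectiveb p by apply/injectiveP => i j; rewrite !pE; apply: injphi.
have imE : im p = [set phi i | i : 'I_h] by apply: eq_imset.
have EimE : Eim EH p = (fun e : {set 'I_h} => phi @: e) @: EH.
  by apply: eq_imset => e; apply: eq_imset.
have := Hw p; rewrite /Aev injp.
case: (boolP [exists u in im p, w \notin Cset k (Eim EH p) u]).
  case/exists_inP => u uI wC _; exists u; split; first by rewrite -imE.
  move: wC; rewrite inE negbK /injw -EimE => /forall_inP H x y xS yS exy.
  by have /forall_inP/(_ y yS)/implyP := H x xS; rewrite exy eqxx => /(_ isT)/eqP.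
rewrite negb_exists_in => /forall_inP H /bigcapP []; move=> u uI.
by have := H u uI; rewrite negbK.
Qed.

Lemma ffact_le_exp m n : n ^_ m <= n ^ m.
Proof.
elim: m n => [|m IH] n; first by [].
rewrite ffactnS expnS; apply: leq_mul => //.
apply: leq_trans (IH _) _; apply: leq_expl; exact: leq_pred.
Qed.

Lemma card_EH_pow r h (EH : {set {set 'I_h}}) :
  @is_rgraph r h EH -> #|EH| <= h ^ r.
Proof.
move=> rg.
have : #|EH| <= 'C(h, r).
  rewrite -[h in 'C(h, _)]card_ord -card_draws; apply: subset_leq_card.
  by apply/subsetP => e eH; rewrite inE rg.
move=> H; apply: leq_trans H _.
apply: leq_trans (ffact_le_exp r h); rewrite -bin_ffact.
by apply: leq_pmulr; exact: fact_gt0.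
Qed.

Lemma card_EH_2 h (EH : {set {set 'I_h}}) : #|EH| <= 2 ^ h.
Proof.
rewrite -[h in 2 ^ h]card_ord -cardsT -card_powerset; apply: subset_leq_card.
by apply/subsetP => e _; rewrite powersetE subsetT.
Qed.

Lemma Cr_le n h k (EH : {set {set 'I_h}}) :
  @has_local_coloring n h k EH -> C_r n EH <= k.
Proof.
move=> H; rewrite /C_r; case: pselect => // ex.
case: ex_minnP => m _; apply; exact/asboolT.
Qed.

Lemma nat_bound r h n M : 0 < h -> 0 < n -> M <= h ^ r -> M <= 2 ^ h ->
  4 * (M * (h ^ r * n ^ (h - r)) + 1) * (M ^ 2) ^ h <= 16 ^ h * h ^ (2 * r * h + r) * n ^ (h - r).
Proof.
move=> h0 n0 M1 M2.
set a := 2 ^ h. set b := h ^ r. set c := n ^ (h - r).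
have b0 : 0 < b by rewrite expn_gt0 h0.
have c0 : 0 < c by rewrite expn_gt0 n0.
have a0 : 0 < a by rewrite expn_gt0.
have E : (M ^ 2) ^ h <= h ^ (2 * r * h).
  have -> : 2 * r * h = r * 2 * h by rewrite (mulnC 2).
  by rewrite !expnM; apply: leq_expl; rewrite leq_sqr.
have a16 : 8 * a <= 16 ^ h.
  have -> : 16 ^ h = 2 ^ (3 * h) * a 
    by rewrite /a -expnD (_ : 3 * h + h = 4 * h) ?expnM //; lia.
  rewrite leq_mul2r; apply/orP; right.
  by apply: (@leq_pexp2l 2 3) => //; lia.
have -> : h ^ (2 * r * h + r) = h ^ (2 * r * h) * b by rewrite expnD.
set d := h ^ (2 * r * h) in E *.
have s1 : M * (b * c) + 1 <= 2 * (a * (b * c)).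
  have : 1 <= a * (b * c) by rewrite !muln_gt0 a0 b0 c0.
  have : M * (b * c) <= a * (b * c) by rewrite leq_mul2r M2 orbT.
  lia.
apply: (@leq_trans (4 * (2 * (a * (b * c))) * d)).
  by apply: leq_mul => //; rewrite leq_mul2l s1 orbT.
apply: (@leq_trans ((8 * a) * (b * c * d))).
  by rewrite !mulnA.
apply: leq_trans (leq_mul a16 (leqnn (b * c * d))) _.
rewrite !mulnA; nia.
Qed.

Lemma INR_expn m e : INR (m ^ e) = pow (INR m) e.
Proof.
elim: e => [|e IH]; first by rewrite expn0.
by rewrite expnS -multE mult_INR IH.
Qed.

Lemma INR_muln a b : INR (a * b) = Rmult (INR a) (INR b).
Proof. by rewrite -multE mult_INR. Qed.

Lemma Rpower_ge1 x y : Rle 1 x -> Rle 0 y -> Rle 1 (Rpower x y).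
Proof.
move=> x1 y0; rewrite -(Rpower_O x); last by lra.
exact: Rle_Rpower.
Qed.

Theorem theorem6 :
  exists c : R, Rlt 0 c /\
    forall (r h : nat) (EH : {set {set 'I_h}}) (n : nat),
      (0 < h)%N -> (r <= h)%N -> (0 < n)%N ->
      @is_rgraph r h EH ->
      Rle (INR (@C_r n h EH))
          (Rmult (Rmult c (Rpower (INR n) (Rdiv (Rminus (INR h) (INR r)) (INR h))))
                 (Rpower (INR h) (Rplus (Rmult 2 (INR r)) (Rdiv (INR r) (INR h))))).
Proof.
exists (IZR 17); split; first by lra.
move=> r h EH n h0 rh n0 rg.
have hR : Rlt 0 (INR h) by apply: lt_0_INR; apply/ltP.
have h1 : Rle 1 (INR h) by apply: (le_INR 1); apply/leP.
have n1 : Rle 1 (INR n) by apply: (le_INR 1); apply/leP.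
have rhR : Rle (INR r) (INR h) by apply: le_INR; apply/leP.
set A := Rpower (INR n) _.
set B := Rpower (INR h) _.
have A1 : Rle 1 A.
  apply: Rpower_ge1 => //; apply: Rmult_le_pos; first lra.
  by apply/Rlt_le/Rinv_0_lt_compat.
have B1 : Rle 1 B.
  apply: Rpower_ge1 => //; apply: Rplus_le_le_0_compat.
    by apply: Rmult_le_pos; [lra | apply: pos_INR].
  by apply: Rmult_le_pos; [apply: pos_INR | apply/Rlt_le/Rinv_0_lt_compat].
set X := Rmult A B.
have X1 : Rle 1 X by rewrite /X -(Rmult_1_l 1); apply: Rmult_le_compat; lra.
have XE : pow (Rmult 16 X) h = INR (16 ^ h * h ^ (2 * r * h + r) * n ^ (h - r)).
  rewrite !INR_muln !INR_expn Rpow_mult_distr /X Rpow_mult_distr.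
  have -> : pow A h = pow (INR n) (h - r).
    rewrite -Rpower_pow; last by lra.
    rewrite /A Rpower_mult -Rpower_pow; last by lra.
    congr Rpower; rewrite -minusE minus_INR; last by apply/leP.
    by field; lra.
  have -> : pow B h = pow (INR h) (2 * r * h + r).
    rewrite -Rpower_pow; last by lra.
    rewrite /B Rpower_mult -Rpower_pow; last by lra.
    congr Rpower; rewrite -plusE plus_INR -!multE !mult_INR.
    by simpl; field; lra.
  have -> : INR 16 = IZR 16 by simpl; lra.
  by ring.
have [z1 z2] := archimed (Rmult 16 X).
set z := up (Rmult 16 X) in z1 z2.
have zpos : (0 <= z)%Z by apply: le_IZR; lra.
set k := Z.to_nat z.
have kE : INR k = IZR z by rewrite INR_IZR_INZ /k Z2Nat.id.
have k0 : (0 < k)%N by apply/ltP; apply: INR_lt; rewrite kE /=; lra.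
have big : (16 ^ h * h ^ (2 * r * h + r) * n ^ (h - r) <= k ^ h)%N.
  apply/leP; apply: INR_le; rewrite -XE INR_expn; apply: pow_incr; lra.
have col : @has_local_coloring n h k EH.
  apply: (exists_coloring rg rh k0); apply: leq_trans big.
  apply: nat_bound => //; [exact: card_EH_pow rg | exact: card_EH_2].
have := Cr_le col => /leP /le_INR Ck.
apply: Rle_trans Ck _; rewrite kE.
rewrite Rmult_assoc -/X; lra.
Qed.
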